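(* Let $\widetilde\nabla$ be the canonical snm-connection on $\mathbb R^3$ determined by $\mathsf C=\partial_z$. There exist $\varepsilon>0$ and a function $f:[0,\varepsilon)\to\mathbb R$, smooth up to $0$, with $f'(0)=0$, such that the rotational surface about the $z$-axis generated by the graph $z=f(x)$, $0<x<\varepsilon$, namely $\{(x\cos t,x\sin t,f(x)):0<x<\varepsilon,\ t\in\mathbb R\}$, has constant sectional curvature $K\equiv\tfrac12$ with respect to $\widetilde\nabla$; in particular its closure meets the rotation axis orthogonally.
   Context: Let $\langle\cdot,\cdot\rangle$ be the Euclidean metric on $\mathbb R^3$ and $\widetilde\nabla^0$ its Levi-Civita connection (the ordinary directional derivative). Given a smooth vector field $\mathsf C$ on $\mathbb R^3$, the semi-symmetric non-metric connection (snm-connection) determined by $\mathsf C$ is $\widetilde\nabla_XY=\widetilde\nabla^0_XY+\langle \mathsf C,Y\rangle X$. Its curvature tensor is $\widetilde R(X,Y)Z=\widetilde\nabla_X\widetilde\nabla_YZ-\widetilde\nabla_Y\widetilde\nabla_XZ-\widetilde\nabla_{[X,Y]}Z$. For a surface $M$ immersed in $\mathbb R^3$, the induced connection is $\nabla_XY=(\widetilde\nabla_XY)^{\top}$ (tangential component), with curvature tensor $R$ defined by the same formula, and the sectional curvature of $M$ with respect to $\widetilde\nabla$ at $p$ is $K(p)=\frac12\big(\langle R(e_1,e_2)e_2,e_1\rangle+\langle R(e_2,e_1)e_1,e_2\rangle\big)$ for an orthonormal basis $\{e_1,e_2\}$ of $T_pM$. *)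

(* Defs.v *)
From Stdlib Require Import Reals.
From Coquelicot Require Import Coquelicot.
Open Scope R_scope.

Definition R3 := (R * R * R)%type.
Definition mkv (a b c : R) : R3 := (a, b, c).
Definition vx (v : R3) : R := fst (fst v).
Definition vy (v : R3) : R := snd (fst v).
Definition vz (v : R3) : R := snd v.
Definition vadd (v w : R3) : R3 := mkv (vx v + vx w) (vy v + vy w) (vz v + vz w).
Definition vscal (k : R) (v : R3) : R3 := mkv (k * vx v) (k * vy v) (k * vz v).
Definition dot (v w : R3) : R := vx v * vx w + vy v * vy w + vz v * vz w.

Definition sfield := R -> R -> R.
Definition vfield := R -> R -> R3.

Definition du (g : sfield) : sfield := fun u v => Derive (fun s => g s v) u.
Definition dv (g : sfield) : sfield := fun u v => Derive (fun s => g u s) v.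
Definition Du (W : vfield) : vfield := fun u v =>
  mkv (du (fun a b => vx (W a b)) u v) (du (fun a b => vy (W a b)) u v)
      (du (fun a b => vz (W a b)) u v).
Definition Dv (W : vfield) : vfield := fun u v =>
  mkv (dv (fun a b => vx (W a b)) u v) (dv (fun a b => vy (W a b)) u v)
      (dv (fun a b => vz (W a b)) u v).

(** Tangent vector fields of M, written in the coordinate frame
    (phi_u, phi_v): X = c1 X * phi_u + c2 X * phi_v. *)
Definition tfield := (sfield * sfield)%type.
Definition c1 (X : tfield) : sfield := fst X.
Definition c2 (X : tfield) : sfield := snd X.
Definition tsub (X Y : tfield) : tfield :=
  (fun u v => c1 X u v - c1 Y u v, fun u v => c2 X u v - c2 Y u v).

Section Surface.
Variable phi : R -> R -> R3.
Variable C : R3 -> R3.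

Definition phiu : vfield := Du phi.
Definition phiv : vfield := Dv phi.

Definition amb (X : tfield) : vfield := fun u v =>
  vadd (vscal (c1 X u v) (phiu u v)) (vscal (c2 X u v) (phiv u v)).

Definition act (X : tfield) (g : sfield) : sfield := fun u v =>
  c1 X u v * du g u v + c2 X u v * dv g u v.

Definition bracket (X Y : tfield) : tfield :=
  (fun u v => act X (c1 Y) u v - act Y (c1 X) u v,
   fun u v => act X (c2 Y) u v - act Y (c2 X) u v).

Definition nabla0 (X : tfield) (W : vfield) : vfield := fun u v =>
  vadd (vscal (c1 X u v) (Du W u v)) (vscal (c2 X u v) (Dv W u v)).

Definition nablaT (X : tfield) (W : vfield) : vfield := fun u v =>
  vadd (nabla0 X W u v) (vscal (dot (C (phi u v)) (W u v)) (amb X u v)).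

Definition EE : sfield := fun u v => dot (phiu u v) (phiu u v).
Definition FF : sfield := fun u v => dot (phiu u v) (phiv u v).
Definition GG : sfield := fun u v => dot (phiv u v) (phiv u v).
Definition DD : sfield := fun u v => EE u v * GG u v - FF u v * FF u v.

(** orthogonal projection onto the tangent plane, in coordinates *)
Definition tanproj (W : vfield) : tfield :=
  (fun u v => (GG u v * dot (W u v) (phiu u v) - FF u v * dot (W u v) (phiv u v))
              / DD u v,
   fun u v => (EE u v * dot (W u v) (phiv u v) - FF u v * dot (W u v) (phiu u v))
              / DD u v).

Definition nabla (X Y : tfield) : tfield := tanproj (nablaT X (amb Y)).

Definition curv (X Y Z : tfield) : tfield :=
  tsub (tsub (nabla X (nabla Y Z)) (nabla Y (nabla X Z))) (nabla (bracket X Y) Z).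

(** the orthonormal frame obtained by Gram-Schmidt from (phi_u, phi_v) *)
Definition e1 : tfield := (fun u v => / sqrt (EE u v), fun u v => 0).
Definition e2 : tfield :=
  (fun u v => - (FF u v / EE u v) / sqrt (DD u v / EE u v),
   fun u v => / sqrt (DD u v / EE u v)).

Definition sect_curv : sfield := fun u v =>
  / 2 * (dot (amb (curv e1 e2 e2) u v) (amb e1 u v)
         + dot (amb (curv e2 e1 e1) u v) (amb e2 u v)).
End Surface.

Definition dz_field : R3 -> R3 := fun _ => mkv 0 0 1.

Definition rot_surface (f : R -> R) : R -> R -> R3 :=
  fun x t => mkv (x * cos t) (x * sin t) (f x).

Definition smooth_on (f : R -> R) (a b : R) : Prop :=
  forall (n : nat) (x : R), a < x < b -> ex_derive (Derive_n f n) x.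

(* Main.v *)
Require Import Defs.
From Stdlib Require Import Reals Lra Psatz Lia FunctionalExtensionality.
From Coquelicot Require Import Coquelicot.
Import Defs.
Open Scope R_scope.

Lemma frac_eq a b c d : b <> 0 -> d <> 0 -> a * d = c * b -> a / b = c / d.
Proof. intros Hb Hd H. field_simplify_eq; auto. lra. Qed.

Lemma Hcs v : cos v * cos v + sin v * sin v = 1.
Proof. pose proof (sin2_cos2 v). unfold Rsqr in H. lra. Qed.

Lemma mkv_eq a b c a' b' c' : a = a' -> b = b' -> c = c' -> mkv a b c = mkv a' b' c'.
Proof. intros -> -> ->; reflexivity. Qed.

Section PartA.
Variable f : R -> R.
Notation g := (Derive f).
Notation phi := (rot_surface f).

Lemma phiu_eq u v : phiu phi u v = mkv (cos v) (sin v) (g u).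
Proof.
  unfold phiu, Du, du, rot_surface, vx, vy, vz, mkv; simpl.
  repeat f_equal; apply is_derive_unique; auto_derive; auto; ring.
Qed.

Lemma phiv_eq u v : phiv phi u v = mkv (- (u * sin v)) (u * cos v) 0.
Proof.
  unfold phiv, Dv, dv, rot_surface, vx, vy, vz, mkv; simpl.
  f_equal; [f_equal|].
  - apply is_derive_unique. auto_derive; auto; ring.
  - apply is_derive_unique. auto_derive; auto; ring.
  - apply Derive_const.
Qed.

Lemma EE_eq u v : EE phi u v = 1 + g u * g u.
Proof. unfold EE; rewrite phiu_eq; unfold dot, vx, vy, vz, mkv; simpl.
  rewrite <- (Hcs v); ring. Qed.
Lemma FF_eq u v : FF phi u v = 0.
Proof. unfold FF; rewrite phiu_eq, phiv_eq; unfold dot, vx, vy, vz, mkv; simpl. ring. Qed.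
Lemma GG_eq u v : GG phi u v = u * u.
Proof. unfold GG; rewrite phiv_eq; unfold dot, vx, vy, vz, mkv; simpl.
  transitivity (u*u*(cos v * cos v + sin v * sin v)); [ring| rewrite Hcs; ring]. Qed.

Lemma E_pos u : 0 < 1 + g u * g u.
Proof. nra. Qed.

Lemma e1_eq : e1 phi = (fun u v => / sqrt (1 + g u * g u), fun _ _ => 0).
Proof. unfold e1. f_equal. apply functional_extensionality; intro u;
  apply functional_extensionality; intro v. rewrite EE_eq. reflexivity. Qed.

Lemma e2_eq : e2 phi = (fun _ _ => 0, fun u _ => / Rabs u).
Proof. unfold e2. f_equal; apply functional_extensionality; intro u;
  apply functional_extensionality; intro v; unfold DD; rewrite EE_eq, FF_eq, GG_eq.
  - unfold Rdiv; ring.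
  - pose proof (E_pos u).
    replace (((1 + g u * g u) * (u * u) - 0 * 0) / (1 + g u * g u)) with (u*u) by (field; lra).
    change (u*u) with (Rsqr u); rewrite sqrt_Rsqr_abs. reflexivity.
Qed.

Lemma amb_eq Y u v : amb phi Y u v =
  mkv (c1 Y u v * cos v - c2 Y u v * u * sin v)
      (c1 Y u v * sin v + c2 Y u v * u * cos v)
      (c1 Y u v * g u).
Proof. unfold amb; rewrite phiu_eq, phiv_eq; unfold vadd, vscal, vx, vy, vz, mkv; simpl.
  f_equal; [f_equal|]; ring. Qed.

Lemma Du_amb Y u v b1u b2u g1 :
  is_derive g u g1 -> is_derive (fun s => c1 Y s v) u b1u ->
  is_derive (fun s => c2 Y s v) u b2u ->
  Du (amb phi Y) u v = mkv (b1u * cos v - (b2u * u + c2 Y u v) * sin v)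
     (b1u * sin v + (b2u * u + c2 Y u v) * cos v) (b1u * g u + c1 Y u v * g1).
Proof.
  intros Hg H1 H2. unfold Du, du.
  set (B1 := fun s => c1 Y s v) in *. set (B2 := fun s => c2 Y s v) in *.
  assert (D1 : Derive B1 u = b1u) by (apply is_derive_unique; exact H1).
  assert (D2 : Derive B2 u = b2u) by (apply is_derive_unique; exact H2).
  assert (D3 : Derive g u = g1) by (apply is_derive_unique; exact Hg).
  assert (E1 : ex_derive B1 u) by (eexists; exact H1).
  assert (E2 : ex_derive B2 u) by (eexists; exact H2).
  assert (E3 : ex_derive g u) by (eexists; exact Hg).
  unfold mkv; f_equal; [f_equal|].
  - rewrite (Derive_ext _ (fun s => B1 s * cos v - B2 s * s * sin v))
      by (intro; rewrite amb_eq; reflexivity).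
    apply is_derive_unique. auto_derive. repeat split; auto.
    change (Derive (fun x => B1 x) u) with (Derive B1 u).
    change (Derive (fun x => B2 x) u) with (Derive B2 u).
    rewrite D1, D2. unfold B2. ring.
  - rewrite (Derive_ext _ (fun s => B1 s * sin v + B2 s * s * cos v))
      by (intro; rewrite amb_eq; reflexivity).
    apply is_derive_unique. auto_derive. repeat split; auto.
    change (Derive (fun x => B1 x) u) with (Derive B1 u).
    change (Derive (fun x => B2 x) u) with (Derive B2 u).
    rewrite D1, D2. unfold B2. ring.
  - rewrite (Derive_ext _ (fun s => B1 s * g s))
      by (intro; rewrite amb_eq; reflexivity).
    apply is_derive_unique. auto_derive. repeat split; auto.
    change (Derive (fun x => B1 x) u) with (Derive B1 u).
    change (Derive (fun x => g x) u) with (Derive g u).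
    rewrite D1, D3. unfold B1. ring.
Qed.

Definition rv (A B Z v : R) : R3 := mkv (A*cos v - B*sin v) (A*sin v + B*cos v) Z.
Lemma rv_add A B Z A' B' Z' v : vadd (rv A B Z v) (rv A' B' Z' v) = rv (A+A') (B+B') (Z+Z') v.
Proof. unfold rv at 1 2, vadd, vx, vy, vz; simpl; unfold rv; apply mkv_eq; ring. Qed.
Lemma rv_scal k A B Z v : vscal k (rv A B Z v) = rv (k*A) (k*B) (k*Z) v.
Proof. unfold rv at 1, vscal, vx, vy, vz; simpl; unfold rv; apply mkv_eq; ring. Qed.
Lemma rv_dot A B Z C D Z' v : dot (rv A B Z v) (rv C D Z' v) = A*C + B*D + Z*Z'.
Proof. unfold rv, dot, vx, vy, vz, mkv; simpl.
  transitivity ((A*C+B*D)*(cos v * cos v + sin v * sin v) + Z*Z'); [ring|rewrite Hcs; ring]. Qed.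

Lemma phiu_rv u v : phiu phi u v = rv 1 0 (g u) v.
Proof. rewrite phiu_eq; unfold rv; apply mkv_eq; ring. Qed.
Lemma phiv_rv u v : phiv phi u v = rv 0 u 0 v.
Proof. rewrite phiv_eq; unfold rv; apply mkv_eq; ring. Qed.
Lemma amb_rv Y u v : amb phi Y u v = rv (c1 Y u v) (c2 Y u v * u) (c1 Y u v * g u) v.
Proof. rewrite amb_eq; unfold rv; apply mkv_eq; ring. Qed.

Lemma Du_rv Y u v b1u b2u g1 :
  is_derive g u g1 -> is_derive (fun s => c1 Y s v) u b1u ->
  is_derive (fun s => c2 Y s v) u b2u ->
  Du (amb phi Y) u v = rv b1u (b2u * u + c2 Y u v) (b1u * g u + c1 Y u v * g1) v.
Proof. intros; erewrite Du_amb by eauto; unfold rv; apply mkv_eq; ring. Qed.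

Lemma Dv_rv Y u v b1v b2v :
  is_derive (fun s => c1 Y u s) v b1v ->
  is_derive (fun s => c2 Y u s) v b2v ->
  Dv (amb phi Y) u v = rv (b1v - c2 Y u v * u) (c1 Y u v + b2v * u) (b1v * g u) v.
Proof.
  intros H1 H2. unfold Dv, dv.
  set (B1 := fun s => c1 Y u s) in *. set (B2 := fun s => c2 Y u s) in *.
  assert (D1 : Derive B1 v = b1v) by (apply is_derive_unique; exact H1).
  assert (D2 : Derive B2 v = b2v) by (apply is_derive_unique; exact H2).
  assert (E1 : ex_derive B1 v) by (eexists; exact H1).
  assert (E2 : ex_derive B2 v) by (eexists; exact H2).
  unfold rv; apply mkv_eq.
  - rewrite (Derive_ext _ (fun s => B1 s * cos s - B2 s * u * sin s))
      by (intro; rewrite amb_eq; reflexivity).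
    apply is_derive_unique. auto_derive. repeat split; auto.
    change (Derive (fun x => B1 x) v) with (Derive B1 v).
    change (Derive (fun x => B2 x) v) with (Derive B2 v).
    rewrite D1, D2. unfold B1, B2. ring.
  - rewrite (Derive_ext _ (fun s => B1 s * sin s + B2 s * u * cos s))
      by (intro; rewrite amb_eq; reflexivity).
    apply is_derive_unique. auto_derive. repeat split; auto.
    change (Derive (fun x => B1 x) v) with (Derive B1 v).
    change (Derive (fun x => B2 x) v) with (Derive B2 v).
    rewrite D1, D2. unfold B1, B2. ring.
  - rewrite (Derive_ext _ (fun s => B1 s * g u))
      by (intro; rewrite amb_eq; reflexivity).
    apply is_derive_unique. auto_derive. repeat split; auto.
    change (Derive (fun x => B1 x) v) with (Derive B1 v).
    rewrite D1. ring.
Qed.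

Lemma nabla_eq X Y u v b1u b2u b1v b2v g1 :
  u <> 0 ->
  is_derive g u g1 ->
  is_derive (fun s => c1 Y s v) u b1u -> is_derive (fun s => c2 Y s v) u b2u ->
  is_derive (fun s => c1 Y u s) v b1v -> is_derive (fun s => c2 Y u s) v b2v ->
  c1 (nabla phi dz_field X Y) u v =
    c1 X u v * (b1u + c1 Y u v * g u * g1 / (1 + g u * g u))
    + c2 X u v * (b1v - u * c2 Y u v / (1 + g u * g u))
    + c1 Y u v * g u * c1 X u v /\
  c2 (nabla phi dz_field X Y) u v =
    c1 X u v * (b2u + c2 Y u v / u) + c2 X u v * (b2v + c1 Y u v / u)
    + c1 Y u v * g u * c2 X u v.
Proof.
  intros Hu Hg H1 H2 H3 H4.
  pose proof (E_pos u) as HE.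
  unfold nabla, tanproj, DD; simpl.
  rewrite !EE_eq, !FF_eq, !GG_eq.
  unfold nablaT, nabla0.
  erewrite Du_rv by eauto. erewrite Dv_rv by eauto.
  rewrite !amb_rv, !phiu_rv, !phiv_rv, !rv_scal, !rv_add, !rv_dot.
  unfold dz_field, rot_surface, dot, vx, vy, vz, mkv; simpl.
  split; field; split; auto; lra.
Qed.

Variable eps : R.
Hypothesis Hgd : forall s, 0 < s < eps -> ex_derive g s.

Lemma loc_int u : 0 < u < eps -> locally u (fun s => 0 < s < eps).
Proof.
  intros Hu. assert (Hr : 0 < Rmin u (eps - u)) by (apply Rmin_glb_lt; lra).
  exists (mkposreal _ Hr). intros y Hy. simpl in Hy. unfold ball in Hy; simpl in Hy.
  unfold AbsRing_ball, abs, minus, plus, opp in Hy; simpl in Hy.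
  pose proof (Rmin_l u (eps - u)). pose proof (Rmin_r u (eps - u)).
  apply Rabs_def2 in Hy. lra.
Qed.

Lemma loc_pos u : 0 < u -> locally u (fun s => 0 < s).
Proof.
  intros Hu. exists (mkposreal _ Hu). intros y Hy. unfold ball in Hy; simpl in Hy.
  unfold AbsRing_ball, abs, minus, plus, opp in Hy; simpl in Hy.
  apply Rabs_def2 in Hy. lra.
Qed.

Lemma der_q u : 0 < u -> is_derive (fun x => / Rabs x) u (- / (u * u)).
Proof.
  intros Hu. apply (is_derive_ext_loc (fun x => / x)).
  - apply (filter_imp (fun s => 0 < s)); [|apply loc_pos; auto].
    intros x Hx. rewrite Rabs_right; lra.
  - auto_derive; [lra|]. field; lra.
Qed.

Definition EEf s := 1 + g s * g s.
Definition pp s := / sqrt (EEf s).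

Lemma sqrtE_pos s : 0 < sqrt (EEf s).
Proof. apply sqrt_lt_R0. unfold EEf. apply E_pos. Qed.

Lemma der_pp s : ex_derive g s ->
  is_derive pp s (- (g s * Derive g s) / (EEf s * sqrt (EEf s))).
Proof.
  intros Hs. pose proof (sqrtE_pos s). pose proof (E_pos s).
  unfold pp, EEf in *. auto_derive.
  - repeat split; auto; lra.
  - change (Derive (fun x => g x) s) with (Derive g s).
    rewrite sqrt_sqrt by lra. field. lra.
Qed.

Lemma e1_eq' : e1 phi = (fun u _ => pp u, fun _ _ => 0).
Proof. rewrite e1_eq. reflexivity. Qed.

Lemma N22 s v : 0 < s < eps ->
  c1 (nabla phi dz_field (e2 phi) (e2 phi)) s v = - / (s * EEf s) /\
  c2 (nabla phi dz_field (e2 phi) (e2 phi)) s v = 0.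
Proof.
  intros Hs. rewrite e2_eq. pose proof (E_pos s).
  edestruct (nabla_eq (fun _ _ => 0, fun u _ => / Rabs u) (fun _ _ => 0, fun u _ => / Rabs u)
    s v 0 (- / (s*s)) 0 0 (Derive g s)) as [H1 H2].
  - lra.
  - destruct (Hgd s Hs) as [l Hl]. rewrite (is_derive_unique _ _ _ Hl). exact Hl.
  - exact (is_derive_const _ _).
  - apply der_q; lra.
  - exact (is_derive_const _ _).
  - exact (is_derive_const _ _).
  - rewrite H1, H2. simpl. rewrite Rabs_right by lra. unfold EEf. split; field; lra.
Qed.

Ltac sqE s := let S := fresh "S" in let HS := fresh "HS" in let HSp := fresh "HSp" in
  pose proof (sqrtE_pos s) as HSp; unfold pp in *; set (S := sqrt (EEf s)) in *;
  assert (HS : 1 + g s * g s = S * S) by (unfold S; rewrite sqrt_sqrt; [reflexivity| pose proof (E_pos s); unfold EEf; lra]);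
  unfold EEf in *; rewrite ?HS in *; clearbody S.

Lemma gder s : 0 < s < eps -> is_derive g s (Derive g s).
Proof. intros Hs. destruct (Hgd s Hs) as [l Hl]. rewrite (is_derive_unique _ _ _ Hl). exact Hl. Qed.

Lemma N12 s v : 0 < s < eps ->
  c1 (nabla phi dz_field (e1 phi) (e2 phi)) s v = 0 /\
  c2 (nabla phi dz_field (e1 phi) (e2 phi)) s v = 0.
Proof.
  intros Hs. rewrite e2_eq, e1_eq'.
  edestruct (nabla_eq (fun u _ => pp u, fun _ _ => 0) (fun _ _ => 0, fun u _ => / Rabs u)
    s v 0 (- / (s*s)) 0 0 (Derive g s)) as [H1 H2].
  - lra.
  - apply gder; auto.
  - exact (is_derive_const _ _).
  - apply der_q; lra.
  - exact (is_derive_const _ _).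
  - exact (is_derive_const _ _).
  - rewrite H1, H2. simpl. rewrite Rabs_right by lra. pose proof (E_pos s). split; field; lra.
Qed.

Lemma N11 s v : 0 < s < eps ->
  c1 (nabla phi dz_field (e1 phi) (e1 phi)) s v = g s / EEf s /\
  c2 (nabla phi dz_field (e1 phi) (e1 phi)) s v = 0.
Proof.
  intros Hs. rewrite e1_eq'.
  edestruct (nabla_eq (fun u _ => pp u, fun _ _ => 0) (fun u _ => pp u, fun _ _ => 0)
    s v (- (g s * Derive g s) / (EEf s * sqrt (EEf s))) 0 0 0 (Derive g s)) as [H1 H2].
  - lra.
  - apply gder; auto.
  - apply der_pp; auto.
  - exact (is_derive_const _ _).
  - exact (is_derive_const _ _).
  - exact (is_derive_const _ _).
  - rewrite H1, H2. simpl. sqE s. split; field; lra.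
Qed.

Definition Ccf s := pp s / s * (/ s + g s).

Lemma N21 s v : 0 < s < eps ->
  c1 (nabla phi dz_field (e2 phi) (e1 phi)) s v = 0 /\
  c2 (nabla phi dz_field (e2 phi) (e1 phi)) s v = Ccf s.
Proof.
  intros Hs. rewrite e1_eq', e2_eq. unfold Ccf.
  edestruct (nabla_eq (fun _ _ => 0, fun u _ => / Rabs u) (fun u _ => pp u, fun _ _ => 0)
    s v (- (g s * Derive g s) / (EEf s * sqrt (EEf s))) 0 0 0 (Derive g s)) as [H1 H2].
  - lra.
  - apply gder; auto.
  - apply der_pp; auto.
  - exact (is_derive_const _ _).
  - exact (is_derive_const _ _).
  - exact (is_derive_const _ _).
  - rewrite H1, H2. simpl. rewrite Rabs_right by lra. pose proof (E_pos s). pose proof (sqrtE_pos s). unfold EEf in *. split; field; repeat split; lra.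
Qed.

Lemma Br12 u v : 0 < u ->
  c1 (bracket (e1 phi) (e2 phi)) u v = 0 /\ c2 (bracket (e1 phi) (e2 phi)) u v = - pp u / (u * u).
Proof.
  intros Hu. rewrite e1_eq', e2_eq. unfold bracket, act, du, dv; simpl.
  replace (Derive (fun s : R => / Rabs s) u) with (- / (u*u))
    by (symmetry; apply is_derive_unique; apply der_q; auto).
  rewrite !Derive_const, Rabs_right by lra. split; field; lra.
Qed.

Lemma Br21 u v : 0 < u ->
  c1 (bracket (e2 phi) (e1 phi)) u v = 0 /\ c2 (bracket (e2 phi) (e1 phi)) u v = pp u / (u * u).
Proof.
  intros Hu. rewrite e1_eq', e2_eq. unfold bracket, act, du, dv; simpl.
  replace (Derive (fun s : R => / Rabs s) u) with (- / (u*u))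
    by (symmetry; apply is_derive_unique; apply der_q; auto).
  rewrite !Derive_const, Rabs_right by lra. split; field; lra.
Qed.

Lemma der_u (C : sfield) (F : R -> R) u v d : 0 < u < eps ->
  (forall s t, 0 < s < eps -> C s t = F s) -> is_derive F u d -> is_derive (fun s => C s v) u d.
Proof.
  intros Hu HC HF. apply (is_derive_ext_loc F); auto.
  apply (filter_imp (fun s => 0 < s < eps)); [|apply loc_int; auto].
  intros x Hx. symmetry; apply HC; auto.
Qed.

Lemma der_v (C : sfield) (F : R -> R) u v : 0 < u < eps ->
  (forall s t, 0 < s < eps -> C s t = F s) -> is_derive (fun t => C u t) v 0.
Proof.
  intros Hu HC. apply (is_derive_ext (fun _ => F u)).
  - intro t; symmetry; apply HC; auto.
  - exact (is_derive_const _ _).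
Qed.

Lemma dA u : 0 < u < eps -> is_derive (fun s => - / (s * EEf s)) u
  ((EEf u + u * (2 * g u * Derive g u)) / ((u * EEf u) * (u * EEf u))).
Proof.
  intros Hu. pose proof (E_pos u). pose proof (Hgd u Hu). unfold EEf in *. auto_derive.
  - repeat split; auto. apply Rmult_integral_contrapositive; split; lra.
  - change (Derive (fun x => g x) u) with (Derive g u). field. lra.
Qed.

Lemma dB u : 0 < u < eps -> is_derive (fun s => g s / EEf s) u
  ((Derive g u * EEf u - g u * (2 * g u * Derive g u)) / (EEf u * EEf u)).
Proof.
  intros Hu. pose proof (E_pos u). pose proof (Hgd u Hu). unfold EEf in *. auto_derive.
  - repeat split; auto. lra.
  - change (Derive (fun x => g x) u) with (Derive g u). field. lra.
Qed.

Lemma dC u : 0 < u < eps -> is_derive Ccf u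
  ((- (g u * Derive g u) / (EEf u * sqrt (EEf u))) / u * (/ u + g u)
   + pp u * (- / (u * u)) * (/ u + g u) + pp u / u * (- / (u * u) + Derive g u)).
Proof.
  intros Hu. pose proof (der_pp u (Hgd u Hu)) as Hp. pose proof (Hgd u Hu).
  unfold Ccf. auto_derive.
  - repeat split; auto. eexists; exact Hp. lra. lra.
    change (Derive (fun x => pp x) u) with (Derive pp u).
    rewrite (is_derive_unique _ _ _ Hp).
    change (Derive (fun x => g x) u) with (Derive g u). field. split; [lra|].
    pose proof (sqrtE_pos u). pose proof (E_pos u). unfold EEf in *.
    split; lra.
Qed.

Lemma de1u u v : 0 < u < eps -> is_derive (fun s => c1 (e1 phi) s v) u
  (- (g u * Derive g u) / (EEf u * sqrt (EEf u))).
Proof. intros Hu. rewrite e1_eq'. simpl. apply der_pp; auto. Qed.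
Lemma de2u u v : 0 < u < eps -> is_derive (fun s => c2 (e2 phi) s v) u (- / (u * u)).
Proof. intros Hu. rewrite e2_eq. simpl. apply der_q; lra. Qed.
Lemma dconst0 (C : sfield) u v : (forall s t, C s t = 0) -> is_derive (fun s => C s v) u 0.
Proof. intros H. apply (is_derive_ext (fun _ => 0)). intro; symmetry; auto. exact (is_derive_const _ _). Qed.
Lemma dconst0' (C : sfield) u v : (forall s t, C s t = 0) -> is_derive (fun t => C u t) v 0.
Proof. intros H. apply (is_derive_ext (fun _ => 0)). intro; symmetry; auto. exact (is_derive_const _ _). Qed.
Lemma dconstv (C : sfield) (F : R -> R) u v : (forall s t, C s t = F s) -> is_derive (fun t => C u t) v 0.
Proof. intros H. apply (is_derive_ext (fun _ => F u)). intro; symmetry; auto. exact (is_derive_const _ _). Qed.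

Lemma tsub_c1 X Y u v : c1 (tsub X Y) u v = c1 X u v - c1 Y u v.
Proof. reflexivity. Qed.
Lemma tsub_c2 X Y u v : c2 (tsub X Y) u v = c2 X u v - c2 Y u v.
Proof. reflexivity. Qed.

Lemma sect_formula u v : 0 < u < eps ->
  sect_curv phi dz_field u v =
  / 2 * (2 * g u * Derive g u / (u * EEf u * EEf u) - g u / (u * EEf u)
         + g u * g u / EEf u - Derive g u / (EEf u * EEf u)).
Proof.
  intros Hu. pose proof (gder u Hu) as Hg.
  unfold sect_curv. rewrite !amb_rv, !rv_dot. unfold curv. rewrite !tsub_c1, !tsub_c2.
  edestruct (nabla_eq (e1 phi) (nabla phi dz_field (e2 phi) (e2 phi)) u v
    ((EEf u + u * (2 * g u * Derive g u)) / ((u * EEf u) * (u * EEf u))) 0 0 0 (Derive g u))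
    as [Ha1 Ha2]; [lra|exact Hg| | | | |].
  { apply (der_u (c1 (nabla phi dz_field (e2 phi) (e2 phi))) (fun s => - / (s * EEf s))); [exact Hu | intros s t Hs; exact (proj1 (N22 s t Hs)) | apply dA; exact Hu ]. }
  { apply (der_u (c2 (nabla phi dz_field (e2 phi) (e2 phi))) (fun s => 0)); [exact Hu | intros s t Hs; exact (proj2 (N22 s t Hs)) | exact (is_derive_const _ _) ]. }
  { apply (der_v (c1 (nabla phi dz_field (e2 phi) (e2 phi))) (fun s => - / (s * EEf s))); [exact Hu | intros s t Hs; exact (proj1 (N22 s t Hs))]. }
  { apply (der_v (c2 (nabla phi dz_field (e2 phi) (e2 phi))) (fun s => 0)); [exact Hu | intros s t Hs; exact (proj2 (N22 s t Hs))]. }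
  edestruct (nabla_eq (e2 phi) (nabla phi dz_field (e1 phi) (e2 phi)) u v 0 0 0 0 (Derive g u))
    as [Hb1 Hb2]; [lra|exact Hg| | | | |].
  { apply (der_u (c1 (nabla phi dz_field (e1 phi) (e2 phi))) (fun s => 0)); [exact Hu | intros s t Hs; exact (proj1 (N12 s t Hs)) | exact (is_derive_const _ _) ]. }
  { apply (der_u (c2 (nabla phi dz_field (e1 phi) (e2 phi))) (fun s => 0)); [exact Hu | intros s t Hs; exact (proj2 (N12 s t Hs)) | exact (is_derive_const _ _) ]. }
  { apply (der_v (c1 (nabla phi dz_field (e1 phi) (e2 phi))) (fun s => 0)); [exact Hu | intros s t Hs; exact (proj1 (N12 s t Hs))]. }
  { apply (der_v (c2 (nabla phi dz_field (e1 phi) (e2 phi))) (fun s => 0)); [exact Hu | intros s t Hs; exact (proj2 (N12 s t Hs))]. }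
  edestruct (nabla_eq (bracket (e1 phi) (e2 phi)) (e2 phi) u v 0 (- / (u * u)) 0 0 (Derive g u))
    as [Hc1 Hc2]; [lra|exact Hg| | | | |].
  { rewrite e2_eq; simpl. exact (is_derive_const _ _). }
  { apply de2u; exact Hu. }
  { rewrite e2_eq; simpl. exact (is_derive_const _ _). }
  { rewrite e2_eq; simpl. exact (is_derive_const _ _). }
  edestruct (nabla_eq (e2 phi) (nabla phi dz_field (e1 phi) (e1 phi)) u v
    ((Derive g u * EEf u - g u * (2 * g u * Derive g u)) / (EEf u * EEf u)) 0 0 0 (Derive g u))
    as [Hd1 Hd2]; [lra|exact Hg| | | | |].
  { apply (der_u (c1 (nabla phi dz_field (e1 phi) (e1 phi))) (fun s => g s / EEf s)); [exact Hu | intros s t Hs; exact (proj1 (N11 s t Hs)) | apply dB; exact Hu ]. }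
  { apply (der_u (c2 (nabla phi dz_field (e1 phi) (e1 phi))) (fun s => 0)); [exact Hu | intros s t Hs; exact (proj2 (N11 s t Hs)) | exact (is_derive_const _ _) ]. }
  { apply (der_v (c1 (nabla phi dz_field (e1 phi) (e1 phi))) (fun s => g s / EEf s)); [exact Hu | intros s t Hs; exact (proj1 (N11 s t Hs))]. }
  { apply (der_v (c2 (nabla phi dz_field (e1 phi) (e1 phi))) (fun s => 0)); [exact Hu | intros s t Hs; exact (proj2 (N11 s t Hs))]. }
  edestruct (nabla_eq (e1 phi) (nabla phi dz_field (e2 phi) (e1 phi)) u v 0
    ((- (g u * Derive g u) / (EEf u * sqrt (EEf u))) / u * (/ u + g u)
   + pp u * (- / (u * u)) * (/ u + g u) + pp u / u * (- / (u * u) + Derive g u)) 0 0 (Derive g u))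
    as [He1 He2]; [lra|exact Hg| | | | |].
  { apply (der_u (c1 (nabla phi dz_field (e2 phi) (e1 phi))) (fun s => 0)); [exact Hu | intros s t Hs; exact (proj1 (N21 s t Hs)) | exact (is_derive_const _ _) ]. }
  { apply (der_u (c2 (nabla phi dz_field (e2 phi) (e1 phi))) Ccf); [exact Hu | intros s t Hs; exact (proj2 (N21 s t Hs)) | apply dC; exact Hu ]. }
  { apply (der_v (c1 (nabla phi dz_field (e2 phi) (e1 phi))) (fun s => 0)); [exact Hu | intros s t Hs; exact (proj1 (N21 s t Hs))]. }
  { apply (der_v (c2 (nabla phi dz_field (e2 phi) (e1 phi))) Ccf); [exact Hu | intros s t Hs; exact (proj2 (N21 s t Hs))]. }
  edestruct (nabla_eq (bracket (e2 phi) (e1 phi)) (e1 phi) u v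
    (- (g u * Derive g u) / (EEf u * sqrt (EEf u))) 0 0 0 (Derive g u))
    as [Hf1 Hf2]; [lra|exact Hg| | | | |].
  { apply de1u; exact Hu. }
  { rewrite e1_eq'; simpl. exact (is_derive_const _ _). }
  { rewrite e1_eq'; simpl. exact (is_derive_const _ _). }
  { rewrite e1_eq'; simpl. exact (is_derive_const _ _). }
  rewrite Ha1, Ha2, Hb1, Hb2, Hc1, Hc2, Hd1, Hd2, He1, He2, Hf1, Hf2.
  destruct (N22 u v Hu) as [-> ->]. destruct (N12 u v Hu) as [-> ->].
  destruct (N11 u v Hu) as [-> ->]. destruct (N21 u v Hu) as [-> ->].
  destruct (Br12 u v ltac:(lra)) as [-> ->]. destruct (Br21 u v ltac:(lra)) as [-> ->].
  rewrite e1_eq', e2_eq. simpl. rewrite Rabs_right by lra. unfold Ccf.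
  clear -Hu. sqE u. set (G := g u) in *. set (G1 := Derive g u) in *. clearbody G G1. field_simplify; [|lra..].
  apply frac_eq; [apply Rgt_not_eq; repeat apply Rmult_lt_0_compat; try apply pow_lt; lra .. |].
  apply Rminus_diag_uniq.
  transitivity (2*S^4*u*(-S^2*u^2*G1 + S^2*u*G - u*G*G1)*(S*S - (1+G*G))); [ring| rewrite HS; ring].
Qed.
End PartA.

Section PartA2.
Variable f : R -> R.
Variable eps : R.
Hypothesis Hgd : forall s, 0 < s < eps -> ex_derive (Derive f) s.
Lemma sect_half u v : 0 < u < eps ->
  Derive (Derive f) u * (2 * Derive f u - u) = (1 + Derive f u * Derive f u) * (Derive f u + u) ->
  sect_curv (rot_surface f) dz_field u v = 1 / 2.
Proof.
  intros Hu Hode. rewrite (sect_formula f eps Hgd u v Hu). unfold EEf.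
  set (G := Derive f u) in *. set (G1 := Derive (Derive f) u) in *. clearbody G G1.
  assert (HE : 0 < 1 + G * G) by nra.
  apply Rminus_diag_uniq.
  transitivity (/ 2 * (G1 * (2 * G - u) - (1 + G * G) * (G + u)) / (u * (1 + G * G) * (1 + G * G))).
  - field. split; lra.
  - rewrite Hode. unfold Rdiv. ring.
Qed.
End PartA2.


Definition gam (k : nat) : R := match k with O => 0 | _ => / (INR k * INR k) end.

Lemma gam_nonneg k : 0 <= gam k.
Proof. destruct k; cbv beta iota delta [gam]; [lra|]. apply Rlt_le, Rinv_0_lt_compat.
  pose proof (lt_0_INR (S k) ltac:(lia)). nra. Qed.

Lemma gam_le1 k : gam k <= 1.
Proof. destruct k; cbv beta iota delta [gam]; [lra|].
  pose proof (le_INR 1 (S k) ltac:(lia)). simpl INR in H at 1.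
  rewrite <- Rinv_1. apply Rinv_le_contravar; nra. Qed.

Lemma sum_rev (h : nat -> R) n : sum_f_R0 (fun k => h (n - k)%nat) n = sum_f_R0 h n.
Proof.
  induction n.
  - simpl. reflexivity.
  - rewrite decomp_sum by lia. simpl pred. rewrite tech5.
    replace (S n - 0)%nat with (S n) by lia.
    rewrite <- IHn. rewrite Rplus_comm. f_equal.
Qed.

Lemma sum_gam_aux n : sum_f_R0 gam (S n) <= 2 - / INR (S n).
Proof.
  induction n.
  - simpl. lra.
  - rewrite tech5. 
    assert (H1 : 1 <= INR (S n)) by (apply (le_INR 1); lia).
    assert (E : INR (S (S n)) = INR (S n) + 1) by (rewrite S_INR; reflexivity).
    unfold gam at 2. rewrite E.
    assert (/ ((INR (S n) + 1) * (INR (S n) + 1)) <= / INR (S n) - / (INR (S n) + 1)).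
    { set (y := INR (S n)) in *. 
      apply (Rmult_le_reg_r (y * (y+1) * (y+1))). nra.
      field_simplify; try lra; clearbody x y; pose proof (Rle_0_sqr (x - y)); unfold Rsqr in *; nra. }
    lra.
Qed.

Lemma sum_gam n : sum_f_R0 gam n <= 2.
Proof.
  destruct n. simpl; lra.
  pose proof (sum_gam_aux n). pose proof (lt_0_INR (S n) ltac:(lia)).
  pose proof (Rinv_0_lt_compat _ H0). lra.
Qed.

Lemma sum_gam_rev n : sum_f_R0 (fun k => gam (n - k)%nat) n <= 2.
Proof. rewrite sum_rev. apply sum_gam. Qed.

Lemma gam_pt1 n k : (1 <= n)%nat -> (k <= n)%nat ->
  gam k * gam (n - k) <= 2 / (INR n * INR n) * (gam k + gam (n - k)).
Proof.
  intros Hn Hk. pose proof (gam_nonneg k). pose proof (gam_nonneg (n-k)).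
  assert (HN : 0 < INR n) by (apply lt_0_INR; lia).
  destruct (Nat.eq_dec k 0) as [->|Hk0].
  { change (gam 0) with 0. rewrite Rmult_0_l. apply Rmult_le_pos; [|lra].
    apply Rmult_le_pos; [lra|]. apply Rlt_le, Rinv_0_lt_compat; nra. }
  destruct (Nat.eq_dec k n) as [->|Hkn].
  { replace (n - n)%nat with 0%nat by lia. change (gam 0) with 0. rewrite Rmult_0_r.
    apply Rmult_le_pos; [|lra]. apply Rmult_le_pos; [lra|]. apply Rlt_le, Rinv_0_lt_compat; nra. }
  assert (Hx : 1 <= INR k) by (apply (le_INR 1); lia).
  assert (Hy : 1 <= INR (n - k)) by (apply (le_INR 1); lia).
  assert (En : INR n = INR k + INR (n - k)) by (rewrite minus_INR by lia; ring).
  unfold gam. destruct k as [|k']; [lia|]. destruct (n - S k')%nat as [|m] eqn:Em; [lia|].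
  rewrite En. set (x := INR (S k')) in *. set (y := INR (S m)) in *.
  apply (Rmult_le_reg_r (x*x*y*y*(x+y)*(x+y))). repeat apply Rmult_lt_0_compat; lra.
  field_simplify; try lra; clearbody x y; pose proof (Rle_0_sqr (x - y)); unfold Rsqr in *; nra.
Qed.

Lemma gam_pt2 n k : (1 <= n)%nat -> (k <= n)%nat ->
  INR k * gam k * gam (n - k) <= 2 / INR n * (gam k + gam (n - k)).
Proof.
  intros Hn Hk. pose proof (gam_nonneg k). pose proof (gam_nonneg (n-k)).
  assert (HN : 0 < INR n) by (apply lt_0_INR; lia).
  destruct (Nat.eq_dec k 0) as [->|Hk0].
  { change (gam 0) with 0. rewrite Rmult_0_r, Rmult_0_l. apply Rmult_le_pos; [|lra].
    apply Rmult_le_pos; [lra|]. apply Rlt_le, Rinv_0_lt_compat; nra. }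
  destruct (Nat.eq_dec k n) as [->|Hkn].
  { replace (n - n)%nat with 0%nat by lia. change (gam 0) with 0. rewrite Rmult_0_r.
    apply Rmult_le_pos; [|lra]. apply Rmult_le_pos; [lra|]. apply Rlt_le, Rinv_0_lt_compat; nra. }
  assert (Hx : 1 <= INR k) by (apply (le_INR 1); lia).
  assert (Hy : 1 <= INR (n - k)) by (apply (le_INR 1); lia).
  assert (En : INR n = INR k + INR (n - k)) by (rewrite minus_INR by lia; ring).
  unfold gam. destruct k as [|k']; [lia|]. destruct (n - S k')%nat as [|m] eqn:Em; [lia|].
  rewrite En. set (x := INR (S k')) in *. set (y := INR (S m)) in *.
  apply (Rmult_le_reg_r (x*x*y*y*(x+y))). repeat apply Rmult_lt_0_compat; lra.
  field_simplify; try lra; clearbody x y; pose proof (Rle_0_sqr (x - y)); unfold Rsqr in *; nra.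
Qed.

Lemma sum_scal_l (c : R) (h : nat -> R) n : sum_f_R0 (fun k => c * h k) n = c * sum_f_R0 h n.
Proof. rewrite scal_sum. apply sum_eq. intros; ring. Qed.

Lemma conv_gam n : PS_mult gam gam n <= 8 * gam n.
Proof.
  unfold PS_mult. destruct n.
  { simpl. lra. }
  apply Rle_trans with (sum_f_R0 (fun k => 2 / (INR (S n) * INR (S n)) * (gam k + gam (S n - k))) (S n)).
  { apply sum_Rle. intros k Hk. apply gam_pt1; lia. }
  rewrite sum_scal_l, sum_plus.
  pose proof (sum_gam (S n)). pose proof (sum_gam_rev (S n)).
  assert (HN : 0 < INR (S n)) by (apply lt_0_INR; lia).
  unfold gam at 3. 
  assert (0 < / (INR (S n) * INR (S n))) by (apply Rinv_0_lt_compat; nra).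
  unfold Rdiv. nra.
Qed.

Lemma conv_gam2 n : PS_mult (fun k => INR k * gam k) gam n <= 8 * INR n * gam n.
Proof.
  unfold PS_mult. destruct n.
  { simpl. lra. }
  apply Rle_trans with (sum_f_R0 (fun k => 2 / INR (S n) * (gam k + gam (S n - k))) (S n)).
  { apply sum_Rle. intros k Hk. apply gam_pt2; lia. }
  rewrite sum_scal_l, sum_plus.
  pose proof (sum_gam (S n)). pose proof (sum_gam_rev (S n)).
  assert (HN : 0 < INR (S n)) by (apply lt_0_INR; lia).
  unfold gam at 3.
  replace (8 * INR (S n) * / (INR (S n) * INR (S n))) with (8 / INR (S n)) by (field; lra).
  assert (0 < / INR (S n)) by (apply Rinv_0_lt_compat; nra).
  unfold Rdiv. nra.
Qed.

Lemma conv_gam3 n : PS_mult gam (PS_mult gam gam) n <= 64 * gam n.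
Proof.
  apply Rle_trans with (8 * PS_mult gam gam n).
  - unfold PS_mult at 1 3. rewrite scal_sum. apply sum_Rle. intros k Hk.
    pose proof (conv_gam (n - k)). pose proof (gam_nonneg k). nra.
  - pose proof (conv_gam n). lra.
Qed.

Lemma PS_mult_dep (a b a' b' : nat -> R) n :
  (forall k, (k <= n)%nat -> a k * b (n - k)%nat = a' k * b' (n - k)%nat) ->
  PS_mult a b n = PS_mult a' b' n.
Proof. intros H. unfold PS_mult. apply sum_eq. auto. Qed.

Lemma PS_mult_abs (a b A B : nat -> R) n :
  (forall k, Rabs (a k) <= A k) -> (forall k, Rabs (b k) <= B k) ->
  Rabs (PS_mult a b n) <= PS_mult A B n.
Proof.
  intros Ha Hb. unfold PS_mult. eapply Rle_trans; [apply sum_f_R0_triangle|].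
  apply sum_Rle. intros k _. rewrite Rabs_mult. apply Rmult_le_compat; try apply Rabs_pos; auto.
Qed.

Lemma PS_mult_scale (c d K : R) (x y : nat -> R) n :
  PS_mult (fun k => c * K ^ k * x k) (fun k => d * K ^ k * y k) n = c * d * K ^ n * PS_mult x y n.
Proof.
  unfold PS_mult. rewrite <- sum_scal_l. apply sum_eq. intros k Hk.
  replace n with (k + (n - k))%nat at 3 by lia. rewrite pow_add. ring.
Qed.

Lemma PS_mult_le (a b A B : nat -> R) n :
  (forall k, 0 <= a k <= A k) -> (forall k, 0 <= b k <= B k) -> PS_mult a b n <= PS_mult A B n.
Proof.
  intros Ha Hb. unfold PS_mult. apply sum_Rle. intros k _.
  destruct (Ha k), (Hb (n - k)%nat). apply Rmult_le_compat; auto.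
Qed.

Definition r3 := sqrt 3.
Definition aa := (1 + r3) / 2.
Definition p0 := aa * aa * (1 + aa).
Definition p1 := 3 * aa * aa + 2 * aa.
Definition p2 := 1 + 3 * aa.
Definition p3 := 1.

Lemma r3_sq : r3 * r3 = 3.
Proof. unfold r3. apply sqrt_sqrt. lra. Qed.
Lemma r3_bounds : 17/10 < r3 < 7/4.
Proof. pose proof r3_sq. assert (0 <= r3) by (unfold r3; apply sqrt_pos). nra. Qed.

Definition dseq (s : nat -> R) (k : nat) := INR k * s k.
Definition Mc (n : nat) (s : nat -> R) := 2 * PS_mult s s n + 2 * PS_mult (dseq s) s n.
Definition Qc (s : nat -> R) (m : nat) :=
  p0 * (if Nat.eqb m 0 then 1 else 0) + p1 * s m + p2 * PS_mult s s m + p3 * PS_mult s (PS_mult s s) m.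
Definition Rc (n : nat) (s : nat -> R) := match n with S (S m) => Qc s m | _ => 0 end.
Definition step (n : nat) (s : nat -> R) := (Rc n s - Mc n s) / ((INR n + 2) * r3).

Fixpoint T (n : nat) : nat -> R :=
  match n with
  | O => fun _ => 0
  | S n' => fun k => if Nat.ltb k n' then T n' k else if Nat.eqb k n' then step n' (T n') else 0
  end.
Definition w (n : nat) := step n (T n).

Lemma T_spec n k : T n k = if Nat.ltb k n then w k else 0.
Proof.
  revert k; induction n; intros k.
  - simpl. destruct (Nat.ltb k 0); reflexivity.
  - simpl. rewrite IHn.
    destruct (Nat.ltb k n) eqn:E1.
    + apply Nat.ltb_lt in E1. replace (Nat.ltb k (S n)) with true; [reflexivity|].
      symmetry; apply Nat.ltb_lt; lia.
    + apply Nat.ltb_ge in E1. destruct (Nat.eqb k n) eqn:E2.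
      * apply Nat.eqb_eq in E2. subst. replace (Nat.ltb n (S n)) with true
          by (symmetry; apply Nat.ltb_lt; lia). reflexivity.
      * apply Nat.eqb_neq in E2. replace (Nat.ltb k (S n)) with false
          by (symmetry; apply Nat.ltb_ge; lia). reflexivity.
Qed.

Lemma w0 : w 0 = 0.
Proof. unfold w, step, Rc, Mc, PS_mult, dseq. simpl. field. pose proof r3_bounds. lra. Qed.

Lemma T0 n : T n 0 = 0.
Proof. rewrite T_spec. destruct (Nat.ltb 0 n); [apply w0|reflexivity]. Qed.

Lemma PS_mult_agree (s s' : nat -> R) m :
  (forall j, (j <= m)%nat -> s j = s' j) -> PS_mult s s m = PS_mult s' s' m.
Proof. intros H. apply PS_mult_dep. intros k Hk. rewrite !H by lia. reflexivity. Qed.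

Lemma Qc_agree (s s' : nat -> R) m :
  (forall j, (j <= m)%nat -> s j = s' j) -> Qc s m = Qc s' m.
Proof.
  intros H. unfold Qc. rewrite (H m) by lia. rewrite (PS_mult_agree s s') by auto.
  f_equal. f_equal. apply PS_mult_dep. intros k Hk. rewrite H by lia.
  rewrite (PS_mult_agree s s') by (intros; apply H; lia). reflexivity.
Qed.

Lemma rec n : (INR n + 2) * r3 * w n + Mc n w = Rc n w.
Proof.
  assert (HM : Mc n (T n) = Mc n w).
  { unfold Mc. f_equal; f_equal.
    - apply PS_mult_dep. intros k Hk.
      destruct (Nat.eq_dec k 0) as [->|H0]; [rewrite T0, w0; ring|].
      destruct (Nat.eq_dec k n) as [->|H1]; [replace (n - n)%nat with 0%nat by lia; rewrite T0, w0; ring|].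
      rewrite !T_spec. replace (Nat.ltb k n) with true by (symmetry; apply Nat.ltb_lt; lia).
      replace (Nat.ltb (n - k) n) with true by (symmetry; apply Nat.ltb_lt; lia). reflexivity.
    - apply PS_mult_dep. intros k Hk. unfold dseq.
      destruct (Nat.eq_dec k 0) as [->|H0]; [simpl; ring|].
      destruct (Nat.eq_dec k n) as [->|H1]; [replace (n - n)%nat with 0%nat by lia; rewrite T0, w0; ring|].
      rewrite !T_spec. replace (Nat.ltb k n) with true by (symmetry; apply Nat.ltb_lt; lia).
      replace (Nat.ltb (n - k) n) with true by (symmetry; apply Nat.ltb_lt; lia). reflexivity. }
  assert (HR : Rc n (T n) = Rc n w).
  { destruct n as [|[|m]]; unfold Rc; auto. apply Qc_agree. intros j Hj. rewrite T_spec.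
    replace (Nat.ltb j (S (S m))) with true by (symmetry; apply Nat.ltb_lt; lia). reflexivity. }
  unfold w at 1, step. rewrite HM, HR. field.
  pose proof r3_bounds. pose proof (pos_INR n). split; lra.
Qed.

Definition dl := 1 / 20.
Definition KK := 11.
Definition beta (n : nat) := dl * KK ^ n * gam n.

Lemma beta_nonneg n : 0 <= beta n.
Proof. unfold beta, dl, KK. pose proof (gam_nonneg n). pose proof (pow_le 11 n ltac:(lra)).
  apply Rmult_le_pos; [|auto]. apply Rmult_le_pos; lra. Qed.

Lemma aa_bounds : 135/100 < aa < 1375/1000.
Proof. unfold aa. pose proof r3_bounds. lra. Qed.

Lemma conv_beta n : PS_mult beta beta n <= 8 * dl * dl * KK ^ n * gam n.
Proof. unfold beta. rewrite PS_mult_scale. pose proof (conv_gam n).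
  assert (0 <= dl * dl * KK ^ n) by (unfold dl, KK; pose proof (pow_le 11 n ltac:(lra)); nra). nra. Qed.

Lemma conv_dbeta n : PS_mult (dseq beta) beta n <= 8 * dl * dl * KK ^ n * INR n * gam n.
Proof.
  unfold dseq, beta.
  rewrite (PS_mult_dep _ _ (fun k => dl * KK ^ k * (INR k * gam k)) (fun k => dl * KK ^ k * gam k))
    by (intros; ring).
  rewrite PS_mult_scale. pose proof (conv_gam2 n).
  assert (0 <= dl * dl * KK ^ n) by (unfold dl, KK; pose proof (pow_le 11 n ltac:(lra)); nra). nra. Qed.

Lemma conv_beta3 n : PS_mult beta (PS_mult beta beta) n <= 64 * dl * dl * dl * KK ^ n * gam n.
Proof.
  rewrite (PS_mult_dep _ _ beta (fun j => (dl * dl) * KK ^ j * PS_mult gam gam j)).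
  2:{ intros k Hk. unfold beta at 2 3. rewrite PS_mult_scale. reflexivity. }
  unfold beta. rewrite PS_mult_scale. pose proof (conv_gam3 n).
  assert (0 <= dl * (dl * dl) * KK ^ n) by (unfold dl, KK; pose proof (pow_le 11 n ltac:(lra)); nra). nra. Qed.

Lemma Mc_bound n s : (forall k, Rabs (s k) <= beta k) ->
  Rabs (Mc n s) <= 16 * dl * dl * KK ^ n * gam n * (1 + INR n).
Proof.
  intros Hs. unfold Mc.
  assert (H1 : Rabs (PS_mult s s n) <= PS_mult beta beta n) by (apply PS_mult_abs; auto).
  assert (H2 : Rabs (PS_mult (dseq s) s n) <= PS_mult (dseq beta) beta n).
  { apply PS_mult_abs; auto. intros k. unfold dseq. rewrite Rabs_mult, Rabs_right
      by (apply Rle_ge, pos_INR). apply Rmult_le_compat_l; [apply pos_INR|auto]. }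
  pose proof (conv_beta n). pose proof (conv_dbeta n).
  eapply Rle_trans; [apply Rabs_triang|]. rewrite !Rabs_mult, !(Rabs_right 2) by lra. lra.
Qed.

Lemma Qc_bound m s : (forall k, Rabs (s k) <= beta k) ->
  Rabs (Qc s m) <= p0 * (if Nat.eqb m 0 then 1 else 0)
     + (p1 + 8 * p2 * dl + 64 * dl * dl) * dl * KK ^ m * gam m.
Proof.
  intros Hs. unfold Qc.
  assert (H1 : Rabs (PS_mult s s m) <= PS_mult beta beta m) by (apply PS_mult_abs; auto).
  assert (H2 : Rabs (PS_mult s (PS_mult s s) m) <= PS_mult beta (PS_mult beta beta) m).
  { apply PS_mult_abs; auto. intros; apply PS_mult_abs; auto. }
  pose proof (conv_beta m). pose proof (conv_beta3 m). pose proof (Hs m). unfold beta in *.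
  pose proof aa_bounds.
  assert (Hp0 : 0 <= p0) by (unfold p0; nra).
  assert (Hp1 : 0 <= p1) by (unfold p1; nra).
  assert (Hp2 : 0 <= p2) by (unfold p2; nra).
  assert (Hb : 0 <= (if Nat.eqb m 0 then 1 else 0)) by (destruct (Nat.eqb m 0); lra).
  eapply Rle_trans; [apply Rabs_triang|].
  eapply Rle_trans; [apply Rplus_le_compat_r; apply Rabs_triang|].
  eapply Rle_trans; [apply Rplus_le_compat_r; apply Rplus_le_compat_r; apply Rabs_triang|].
  rewrite !Rabs_mult, !(Rabs_right p0), !(Rabs_right p1), !(Rabs_right p2), (Rabs_right p3),
    (Rabs_right (if Nat.eqb m 0 then 1 else 0)) by (unfold p3; lra).
  unfold p3. nra.
Qed.

Lemma step_bound n s : (forall k, Rabs (s k) <= beta k) -> Rabs (step n s) <= beta n.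
Proof.
  intros Hs. pose proof (Mc_bound n s Hs) as HM. pose proof r3_bounds as Hr.
  pose proof (pos_INR n) as Hn.
  assert (Hden : 0 < (INR n + 2) * r3) by nra.
  unfold step, Rdiv. rewrite Rabs_mult, Rabs_inv by lra. rewrite (Rabs_right ((INR n + 2) * r3)) by lra.
  apply (Rmult_le_reg_r ((INR n + 2) * r3)); [lra|].
  rewrite Rmult_assoc, Rinv_l, Rmult_1_r by lra.
  eapply Rle_trans; [unfold Rminus; apply Rabs_triang|]. rewrite Rabs_Ropp.
  assert (HK : 0 < KK ^ n) by (unfold KK; apply pow_lt; lra).
  pose proof (gam_nonneg n) as Hg.
  assert (HMb : 16 * dl * dl * KK ^ n * gam n * (1 + INR n) <= / 2 * beta n * ((INR n + 2) * r3)).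
  { unfold beta, dl. assert (HX : 0 <= KK ^ n * gam n) by (apply Rmult_le_pos; lra).
    assert (Hq : 16 * (1/20) * (1/20) * (1 + INR n) <= / 2 * (1/20) * ((INR n + 2) * r3)) by nra.
    replace (16 * (1/20) * (1/20) * KK ^ n * gam n * (1 + INR n)) with
      (KK ^ n * gam n * (16 * (1/20) * (1/20) * (1 + INR n))) by ring.
    replace (/ 2 * (1 / 20 * KK ^ n * gam n) * ((INR n + 2) * r3)) with
      (KK ^ n * gam n * (/ 2 * (1/20) * ((INR n + 2) * r3))) by ring.
    apply Rmult_le_compat_l; auto. }
  assert (HBX : 0 <= beta n * ((INR n + 2) * r3)) by (apply Rmult_le_pos; [apply beta_nonneg|lra]).
  destruct n as [|[|m]].
  - unfold Rc. rewrite Rabs_R0. lra.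
  - unfold Rc. rewrite Rabs_R0. lra.
  - unfold Rc. pose proof (Qc_bound m s Hs) as HQ.
    enough (p0 * (if Nat.eqb m 0 then 1 else 0) + (p1 + 8 * p2 * dl + 64 * dl * dl) * dl * KK ^ m * gam m
      <= / 2 * beta (S (S m)) * ((INR (S (S m)) + 2) * r3)) by lra.
    clear HMb HM. pose proof aa_bounds.
    assert (Hc : p1 + 8 * p2 * dl + 64 * dl * dl <= 11) by (unfold p1, p2, dl; nra).
    assert (Hc0 : 0 <= p1 + 8 * p2 * dl + 64 * dl * dl) by (unfold p1, p2, dl; nra).
    unfold beta. rewrite <- !tech_pow_Rmult. rewrite !S_INR.
    assert (HKm : 0 < KK ^ m) by (unfold KK; apply pow_lt; lra).
    destruct m as [|m'].
    + simpl Nat.eqb. unfold gam. simpl INR. simpl pow. unfold KK, dl, p0.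
      replace (/ ((1+1) * (1+1))) with (/4) by field. nra.
    + simpl Nat.eqb. unfold gam. set (x := INR (S m')) in *.
      assert (Hx : 1 <= x) by (unfold x; apply (le_INR 1); lia).
      replace (INR (S (S (S m')))) with (x + 1 + 1) by (unfold x; rewrite !S_INR; ring).
      unfold dl, KK in *. set (P := 11 ^ S m') in *. clearbody x P.
      set (c := p1 + 8 * p2 * (1 / 20) + 64 * (1 / 20) * (1 / 20)) in *. clearbody c.
      apply (Rmult_le_reg_r (x * x * (x+2) * (x+2))). repeat apply Rmult_lt_0_compat; lra.
      replace ((p0 * 0 + c * (1 / 20) * P * / (x * x)) * (x * x * (x + 2) * (x + 2)))
        with (c * (1/20) * P * ((x+2)*(x+2))) by (field; lra).
      replace (/ 2 * (1 / 20 * (11 * (11 * P)) * / ((x + 1 + 1) * (x + 1 + 1))) *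
         ((x + 1 + 1 + 2) * r3) * (x * x * (x + 2) * (x + 2)))
        with (/2 * (1/20) * 121 * P * (x + 4) * r3 * (x*x)) by (field; lra).
      assert ((x+2)*(x+2) <= 9 * (x*x)) by nra.
      assert (0 <= c * (1/20) * P) by nra.
      assert (c * (1/20) * P * ((x+2)*(x+2)) <= c * (1/20) * P * (9 * (x*x))) by nra.
      assert (c * (1/20) * P * (9 * (x*x)) <= /2 * (1/20) * 121 * P * (x + 4) * r3 * (x*x)).
      { assert (HPx : 0 <= P * (x*x)) by nra.
        replace (c * (1/20) * P * (9 * (x*x))) with ((P * (x*x)) * (9 * c / 20)) by field.
        replace (/2 * (1/20) * 121 * P * (x + 4) * r3 * (x*x)) with ((P * (x*x)) * (121 / 40 * (x+4) * r3)) by field.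
        apply Rmult_le_compat_l; auto. nra. }
      lra.
Qed.

Lemma w_bound n : Rabs (w n) <= beta n.
Proof.
  assert (forall N k, (k < N)%nat -> Rabs (w k) <= beta k).
  { induction N; intros k Hk; [lia|].
    destruct (Nat.eq_dec k N) as [->|Hne]; [|apply IHN; lia].
    unfold w at 1. apply step_bound. intros j. rewrite T_spec.
    destruct (Nat.ltb j N) eqn:E.
    - apply IHN. apply Nat.ltb_lt; auto.
    - rewrite Rabs_R0. apply beta_nonneg. }
  apply (H (S n)). lia.
Qed.

Lemma KK_pos : 0 < KK.
Proof. unfold KK; lra. Qed.

Lemma radius_ge (a : nat -> R) C : (forall n, Rabs (a n) <= C * KK ^ n) ->
  Rbar_le (/ KK) (CV_radius a).
Proof.
  intros H. destruct (CV_radius_bounded a) as [Hub _]. apply Hub.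
  exists C. intros n. rewrite Rabs_mult, <- RPow_abs, (Rabs_right (/ KK))
    by (apply Rle_ge, Rlt_le, Rinv_0_lt_compat, KK_pos).
  rewrite <- Rinv_pow by (apply Rgt_not_eq, KK_pos).
  assert (0 < KK ^ n) by (apply pow_lt, KK_pos).
  apply (Rmult_le_reg_r (KK ^ n)); auto. rewrite Rmult_assoc, Rinv_l by lra. rewrite Rmult_1_r. apply H.
Qed.

Lemma inside (a : nat -> R) C x : (forall n, Rabs (a n) <= C * KK ^ n) -> Rabs x < / KK ->
  Rbar_lt (Rabs x) (CV_radius a).
Proof. intros H Hx. eapply Rbar_lt_le_trans; [|apply (radius_ge a C H)]. exact Hx. Qed.

Lemma KKn_ge1 n : 1 <= KK ^ n.
Proof. apply pow_R1_Rle. unfold KK; lra. Qed.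

Lemma bw n : Rabs (w n) <= dl * KK ^ n.
Proof. eapply Rle_trans; [apply w_bound|]. unfold beta. pose proof (gam_le1 n).
  pose proof (gam_nonneg n). assert (0 <= dl * KK ^ n) by (unfold dl; pose proof (KKn_ge1 n); nra). nra. Qed.

Lemma ngam_le1 n : INR n * gam n <= 1.
Proof. destruct n. simpl; lra. unfold gam. pose proof (le_INR 1 (S n) ltac:(lia)). simpl INR at 1 in H.
  set (y := INR (S n)) in *. replace (y * / (y*y)) with (/ y) by (field; lra).
  rewrite <- Rinv_1. apply Rinv_le_contravar; lra. Qed.

Lemma bdw n : Rabs (dseq w n) <= dl * KK ^ n.
Proof. unfold dseq. rewrite Rabs_mult, Rabs_right by (apply Rle_ge, pos_INR).
  pose proof (w_bound n). unfold beta in *. pose proof (ngam_le1 n). pose proof (pos_INR n).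
  pose proof (gam_nonneg n).
  assert (0 <= dl * KK ^ n) by (unfold dl; pose proof (KKn_ge1 n); nra).
  apply Rle_trans with (INR n * (dl * KK ^ n * gam n)). apply Rmult_le_compat_l; auto.
  replace (INR n * (dl * KK ^ n * gam n)) with ((dl * KK ^ n) * (INR n * gam n)) by ring.
  rewrite <- (Rmult_1_r (dl * KK ^ n)) at 2. apply Rmult_le_compat_l; auto. Qed.

Lemma w_abs_beta k : Rabs (w k) <= beta k.
Proof. apply w_bound. Qed.

Lemma bww n : Rabs (PS_mult w w n) <= 8 * dl * dl * KK ^ n.
Proof. eapply Rle_trans; [apply PS_mult_abs; apply w_bound|].
  eapply Rle_trans; [apply conv_beta|]. pose proof (gam_le1 n). pose proof (gam_nonneg n).
  assert (0 <= 8 * dl * dl * KK ^ n) by (unfold dl; pose proof (KKn_ge1 n); nra). nra. Qed.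

Lemma bdww n : Rabs (PS_mult (dseq w) w n) <= 8 * dl * dl * KK ^ n.
Proof. eapply Rle_trans; [apply (PS_mult_abs _ _ (dseq beta) beta)|].
  - intros k. unfold dseq. rewrite Rabs_mult, Rabs_right by (apply Rle_ge, pos_INR).
    apply Rmult_le_compat_l; [apply pos_INR|apply w_bound].
  - apply w_bound.
  - eapply Rle_trans; [apply conv_dbeta|]. pose proof (ngam_le1 n). pose proof (pos_INR n).
    pose proof (gam_nonneg n).
    assert (0 <= 8 * dl * dl * KK ^ n) by (unfold dl; pose proof (KKn_ge1 n); nra).
    replace (8 * dl * dl * KK ^ n * INR n * gam n) with ((8 * dl * dl * KK ^ n) * (INR n * gam n)) by ring.
    rewrite <- (Rmult_1_r (8 * dl * dl * KK ^ n)) at 2. apply Rmult_le_compat_l; auto. Qed.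

Lemma bwww n : Rabs (PS_mult w (PS_mult w w) n) <= 64 * dl * dl * dl * KK ^ n.
Proof. eapply Rle_trans; [apply PS_mult_abs; [apply w_bound| intros; apply PS_mult_abs; apply w_bound]|].
  eapply Rle_trans; [apply conv_beta3|]. pose proof (gam_le1 n). pose proof (gam_nonneg n).
  assert (0 <= 64 * dl * dl * dl * KK ^ n) by (unfold dl; pose proof (KKn_ge1 n); nra). nra. Qed.

Definition e0 (m : nat) : R := if Nat.eqb m 0 then 1 else 0.
Lemma be0 n : Rabs (e0 n) <= 1 * KK ^ n.
Proof. unfold e0. pose proof (KKn_ge1 n). destruct (Nat.eqb n 0); rewrite ?Rabs_R1, ?Rabs_R0; lra. Qed.

Lemma PSeries_e0 x : Rabs x < / KK -> PSeries e0 x = 1.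
Proof.
  intros Hx. rewrite PSeries_decr_1.
  - rewrite (PSeries_ext _ (fun _ => 0)) by (intros; reflexivity). rewrite PSeries_const_0.
    unfold e0; simpl. ring.
  - apply CV_radius_inside. apply (inside e0 1); auto. apply be0.
Qed.

Section Ser.
Variable x : R.
Hypothesis Hx : Rabs x < / KK.

Lemma ex_of (a : nat -> R) C : (forall n, Rabs (a n) <= C * KK ^ n) -> ex_pseries a x.
Proof. intros H. apply CV_radius_inside. apply (inside a C); auto. Qed.

Lemma in_of (a : nat -> R) C : (forall n, Rabs (a n) <= C * KK ^ n) -> Rbar_lt (Rabs x) (CV_radius a).
Proof. intros H. apply (inside a C); auto. Qed.

Lemma ex_scal c (a : nat -> R) : ex_pseries a x -> ex_pseries (PS_scal c a) x.
Proof. intros H. apply ex_pseries_scal; auto. unfold mult; simpl. ring. Qed.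

Let Ew := ex_of w dl bw.
Let Ed := ex_of (dseq w) dl bdw.
Let Eww := ex_of _ _ bww.
Let Edw := ex_of _ _ bdww.
Let Ewww := ex_of _ _ bwww.
Let Ee := ex_of e0 1 be0.

Lemma ser_id :
  2 * r3 * PSeries w x + r3 * PSeries (dseq w) x + 2 * (PSeries w x * PSeries w x)
  + 2 * (PSeries (dseq w) x * PSeries w x)
  = x ^ 2 * (p0 + p1 * PSeries w x + p2 * (PSeries w x * PSeries w x)
             + p3 * (PSeries w x * (PSeries w x * PSeries w x))).
Proof.
  assert (Iw := in_of w dl bw). assert (Id := in_of (dseq w) dl bdw).
  assert (Iww := in_of _ _ bww).
  rewrite <- !PSeries_mult by auto.
  replace p0 with (p0 * PSeries e0 x) by (rewrite (PSeries_e0 x Hx); ring). rewrite <- !PSeries_scal.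
  assert (S1 := ex_scal (2 * r3) w Ew). assert (S2 := ex_scal r3 _ Ed).
  assert (S3 := ex_scal 2 _ Eww). assert (S4 := ex_scal 2 _ Edw).
  assert (S5 := ex_scal p0 _ Ee). assert (S6 := ex_scal p1 _ Ew).
  assert (S7 := ex_scal p2 _ Eww). assert (S8 := ex_scal p3 _ Ewww).
  rewrite <- (PSeries_plus _ _ _ S1 S2). rewrite <- (PSeries_plus _ _ _ S5 S6).
  rewrite <- (PSeries_plus _ _ _ (ex_pseries_plus _ _ _ S1 S2) S3).
  rewrite <- (PSeries_plus _ _ _ (ex_pseries_plus _ _ _ S5 S6) S7).
  rewrite <- (PSeries_plus _ _ _ (ex_pseries_plus _ _ _ (ex_pseries_plus _ _ _ S1 S2) S3) S4).
  rewrite <- (PSeries_plus _ _ _ (ex_pseries_plus _ _ _ (ex_pseries_plus _ _ _ S5 S6) S7) S8).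
  rewrite <- PSeries_incr_n.
  apply PSeries_ext. intros n.
  transitivity ((INR n + 2) * r3 * w n + Mc n w).
  { unfold PS_plus, PS_scal, plus, scal, mult, Mc, dseq; simpl; unfold mult; simpl. ring. }
  rewrite rec. rewrite PS_incr_n_simplify.
  destruct (Compare_dec.le_lt_dec 2 n) as [Hn|Hn].
  - destruct n as [|[|m]]; try lia. replace (S (S m) - 2)%nat with m by lia.
    unfold Rc, Qc, PS_plus, PS_scal, plus, scal, e0; simpl; unfold mult; simpl. ring.
  - destruct n as [|[|m]]; try lia; reflexivity.
Qed.

Lemma ode_W :
  (aa + PSeries w x + PSeries (dseq w) x) * (2 * (x * (aa + PSeries w x)) - x)
  = (1 + x * (aa + PSeries w x) * (x * (aa + PSeries w x))) * (x * (aa + PSeries w x) + x).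
Proof.
  pose proof ser_id as H. pose proof r3_sq as H3.
  set (W := PSeries w x) in *. set (V := PSeries (dseq w) x) in *. clearbody W V.
  apply Rminus_diag_uniq.
  transitivity (x * ((r3 * r3 - 3) / 2 +
    ((2 * r3 * W + r3 * V + 2 * (W * W) + 2 * (V * W))
     - x ^ 2 * (p0 + p1 * W + p2 * (W * W) + p3 * (W * (W * W)))))).
  - unfold p0, p1, p2, p3, aa. field.
  - rewrite H3, H. field.
Qed.
End Ser.

Definition hc (k : nat) := aa * e0 k + w k.
Definition gc (n : nat) := match n with O => 0 | S k => hc k end.
Definition fsol := PSeries (PS_Int gc).

Lemma bgc n : Rabs (gc n) <= (aa + dl) * KK ^ n.
Proof.
  pose proof aa_bounds. destruct n as [|k].
  - simpl. rewrite Rabs_R0. unfold dl. lra.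
  - unfold gc, hc. eapply Rle_trans; [apply Rabs_triang|].
    rewrite Rabs_mult, Rabs_right by lra. pose proof (be0 k). pose proof (bw k).
    pose proof (KKn_ge1 k). assert (Rabs (e0 k) <= 1) by (unfold e0; destruct (Nat.eqb k 0);
      rewrite ?Rabs_R1, ?Rabs_R0; lra).
    simpl pow. unfold KK, dl in *. nra.
Qed.

Lemma Dfsol y : Rabs y < / KK -> is_derive fsol y (PSeries gc y).
Proof.
  intros Hy. unfold fsol.
  assert (HI : Rbar_lt (Rabs y) (CV_radius (PS_Int gc))) by (rewrite CV_radius_Int; apply (inside gc _ y bgc Hy)).
  pose proof (is_derive_PSeries _ _ HI) as H.
  rewrite (PSeries_ext _ gc) in H; auto.
  intros n. unfold PS_derive, PS_Int. pose proof (lt_0_INR (S n) ltac:(lia)). field. lra.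
Qed.

Lemma PS_derive_gc n : PS_derive gc n = aa * e0 n + w n + dseq w n.
Proof.
  unfold PS_derive, gc, hc, dseq, e0. destruct n as [|m]; simpl Nat.eqb.
  - rewrite w0. simpl. ring.
  - rewrite !S_INR. ring.
Qed.

Lemma Dgc y : Rabs y < / KK ->
  is_derive (PSeries gc) y (aa + PSeries w y + PSeries (dseq w) y).
Proof.
  intros Hy. assert (HI : Rbar_lt (Rabs y) (CV_radius gc)) by (apply (inside gc _ y bgc Hy)).
  pose proof (is_derive_PSeries _ _ HI) as H.
  rewrite (PSeries_ext _ (PS_plus (PS_plus (PS_scal aa e0) w) (dseq w))) in H.
  2: { intros n. rewrite PS_derive_gc. unfold PS_plus, PS_scal, plus, scal; simpl; unfold mult; simpl. ring. }
  rewrite !PSeries_plus, PSeries_scal, (PSeries_e0 y Hy), Rmult_1_r in H; auto.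
  - apply ex_scal; auto. apply (ex_of y Hy e0 1 be0).
  - apply (ex_of y Hy w dl bw).
  - apply ex_pseries_plus; [apply ex_scal; auto; apply (ex_of y Hy e0 1 be0)|apply (ex_of y Hy w dl bw)].
  - apply (ex_of y Hy (dseq w) dl bdw).
Qed.

Lemma gc_val y : Rabs y < / KK -> PSeries gc y = y * (aa + PSeries w y).
Proof.
  intros Hy. rewrite (PSeries_ext gc (PS_incr_1 hc)) by (intros [|n]; reflexivity).
  rewrite PSeries_incr_1. f_equal. unfold hc.
  rewrite (PSeries_ext _ (PS_plus (PS_scal aa e0) w))
    by (intros n; unfold PS_plus, PS_scal, plus, scal; simpl; unfold mult; simpl; ring).
  rewrite PSeries_plus, PSeries_scal, (PSeries_e0 y Hy); [ring| |].
  - apply ex_scal; auto. apply (ex_of y Hy e0 1 be0).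
  - apply (ex_of y Hy w dl bw).
Qed.


Lemma loc_abs x : Rabs x < / KK -> locally x (fun y => Rabs y < / KK).
Proof.
  intros Hx. assert (Hr : 0 < / KK - Rabs x) by lra.
  exists (mkposreal _ Hr). intros y Hy. unfold ball in Hy; simpl in Hy.
  unfold AbsRing_ball, abs, minus, plus, opp in Hy; simpl in Hy.
  pose proof (Rabs_triang_inv y x). unfold Rminus in *. lra.
Qed.

Lemma Dfsol_loc x : Rabs x < / KK -> locally x (fun y => Derive fsol y = PSeries gc y).
Proof.
  intros Hx. apply (filter_imp (fun y => Rabs y < / KK)); [|apply loc_abs; auto].
  intros y Hy. apply is_derive_unique. apply Dfsol; auto.
Qed.

Theorem theorem4p5 :
  exists (eps : R) (f : R -> R),
    0 < eps /\
    smooth_on f (- eps) eps /\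
    Derive f 0 = 0 /\
    (forall x t : R, 0 < x < eps ->
       sect_curv (rot_surface f) dz_field x t = 1 / 2).
Proof.
  assert (HK : 0 < / KK) by (apply Rinv_0_lt_compat, KK_pos).
  exists (/ KK), fsol. split; [exact HK|]. split; [|split].
  - intros n x Hx. assert (Hax : Rabs x < / KK) by (apply Rabs_def1; lra).
    assert (HI : forall y, Rabs y < / KK -> Rbar_lt (Rabs y) (CV_radius (PS_Int gc)))
      by (intros y Hy; rewrite CV_radius_Int; apply (inside gc _ y bgc Hy)).
    apply (ex_derive_ext_loc (PSeries (PS_derive_n n (PS_Int gc)))).
    + apply (filter_imp (fun y => Rabs y < / KK)); [|apply loc_abs; auto].
      intros y Hy. unfold fsol. symmetry. apply Derive_n_PSeries. auto.
    + eexists. apply is_derive_PSeries. rewrite CV_radius_derive_n. auto.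
  - apply is_derive_unique. assert (H0 : Rabs 0 < / KK) by (rewrite Rabs_R0; auto).
    pose proof (Dfsol 0 H0) as D. rewrite PSeries_0 in D. exact D.
  - intros u t Hu.
    assert (Hloc : forall s, 0 < s < / KK -> Rabs s < / KK) by (intros s Hs; rewrite Rabs_right; lra).
    apply (sect_half fsol (/ KK)); auto.
    + intros s Hs. apply (ex_derive_ext_loc (PSeries gc)).
      * apply (filter_imp (fun y => Derive fsol y = PSeries gc y)); [intros; symmetry; auto|].
        apply Dfsol_loc; auto.
      * eexists. apply Dgc; auto.
    + assert (Hu' := Hloc u Hu).
      rewrite (Derive_ext_loc _ _ _ (Dfsol_loc u Hu')).
      rewrite (is_derive_unique _ _ _ (Dgc u Hu')).
      rewrite (is_derive_unique _ _ _ (Dfsol u Hu')).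
      rewrite (gc_val u Hu'). apply ode_W. auto.
Qed.
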